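(* Suppose A1–A3 hold and that $\sum_{k=0}^{\infty}\nu_k<+\infty$. Let $\{x_k\}$ be generated by Algorithm 1 and let $\epsilon\in(0,1)$. If $T$ is a positive integer with $$T\ge 2\max\left\{\sum_{k=0}^{\infty}\nu_k,\ f(x_0)-f_{low}\right\}\kappa_c^{-1}\epsilon^{-2},$$ then $\min_{k=0,\dots,T-1}\|\nabla f(x_k)\|\le\epsilon$.
   Context: Let $(X,\langle\cdot,\cdot\rangle)$ be a real Hilbert space with induced norm $\|\cdot\|$, and $f:X\to\mathbb{R}$ Fréchet differentiable with gradient $\nabla f$. Algorithm 1 (general non-monotone descent algorithm): parameters $x_0\in X$, $\alpha_0>0$, $\beta,\rho\in(0,1)$. For $k=0,1,2,\dots$: choose $d_k\in X$ with $\langle\nabla f(x_k),d_k\rangle<0$; then for $l=0,1,2,\dots$ choose a number $\nu_{k,l}\ge 0$ and test $$f(x_k+\alpha_k\beta^l d_k)\le f(x_k)+\rho\alpha_k\beta^l\langle\nabla f(x_k),d_k\rangle+\nu_{k,l};$$ let $l_k$ be the first $l$ for which this holds, set $\nu_k:=\nu_{k,l_k}$, $x_{k+1}=x_k+\alpha_k\beta^{l_k}d_k$ and $\alpha_{k+1}=\alpha_k\beta^{l_k-1}$. It is assumed the algorithm generates infinite sequences (all $l_k$ finite). Assumptions: A1: $\nabla f$ is Lipschitz continuous with constant $L>0$. A2: there is $f_{low}\in\mathbb{R}$ with $f(x)\ge f_{low}$ for all $x\in X$. A3: there are constants $c_1,c_2>0$ with $\langle\nabla f(x_k),d_k\rangle\le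 -c_1\|\nabla f(x_k)\|^2$ and $\|d_k\|\le c_2\|\nabla f(x_k)\|$ for all $k$. Constant: $\kappa_c=\min\left\{\rho\beta\alpha_0c_1,\ \frac{2\beta\rho(1-\rho)c_1^2}{Lc_2^2}\right\}$. *)

(* Defs.v *)
From Stdlib Require Import Reals Lra.
Open Scope R_scope.

Record hilbert (X : Type) := Hilbert {
  hzero : X;
  hadd : X -> X -> X;
  hopp : X -> X;
  hscal : R -> X -> X;
  hinner : X -> X -> R;
  hadd_assoc : forall x y z, hadd x (hadd y z) = hadd (hadd x y) z;
  hadd_comm : forall x y, hadd x y = hadd y x;
  hadd_0 : forall x, hadd x hzero = x;
  hadd_opp : forall x, hadd x (hopp x) = hzero;
  hscal_assoc : forall a b x, hscal a (hscal b x) = hscal (a * b) x;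
  hscal_1 : forall x, hscal 1 x = x;
  hscal_distr_v : forall a x y, hscal a (hadd x y) = hadd (hscal a x) (hscal a y);
  hscal_distr_s : forall a b x, hscal (a + b) x = hadd (hscal a x) (hscal b x);
  hinner_sym : forall x y, hinner x y = hinner y x;
  hinner_add : forall x y z, hinner (hadd x y) z = hinner x z + hinner y z;
  hinner_scal : forall a x y, hinner (hscal a x) y = a * hinner x y;
  hinner_pos : forall x, 0 <= hinner x x;
  hinner_def : forall x, hinner x x = 0 -> x = hzero;
  hcomplete : forall u : nat -> X,
    (forall eps, eps > 0 -> exists N, forall m n, (m >= N)%nat -> (n >= N)%nat ->
        sqrt (hinner (hadd (u m) (hopp (u n))) (hadd (u m) (hopp (u n)))) < eps) ->
    exists l, forall eps, eps > 0 -> exists N, forall n, (n >= N)%nat ->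
        sqrt (hinner (hadd (u n) (hopp l)) (hadd (u n) (hopp l))) < eps
}.

Arguments hzero {X} _.
Arguments hadd {X} _ _ _.
Arguments hopp {X} _ _.
Arguments hscal {X} _ _ _.
Arguments hinner {X} _ _ _.

Definition hnorm {X} (H : hilbert X) (x : X) : R := sqrt (hinner H x x).
Definition hsub {X} (H : hilbert X) (x y : X) : X := hadd H x (hopp H y).

Definition frechet_gradient {X} (H : hilbert X) (f : X -> R) (g : X -> X) : Prop :=
  forall x eps, eps > 0 -> exists delta, delta > 0 /\
    forall h, hnorm H h < delta ->
      Rabs (f (hadd H x h) - f x - hinner H (g x) h) <= eps * hnorm H h.

(* Algorithm 1 (general non-monotone descent algorithm): the sequences
   x k, alpha k, d k, the trial numbers nu k l = nu_{k,l}, and the accepted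
   indices l k = l_k are those produced by a run of the algorithm. *)
Definition algorithm1 {X} (H : hilbert X) (f : X -> R) (g : X -> X)
  (x0 : X) (alpha0 beta rho : R)
  (x : nat -> X) (alpha : nat -> R) (d : nat -> X)
  (nu : nat -> nat -> R) (l : nat -> nat) : Prop :=
  alpha0 > 0 /\ 0 < beta < 1 /\ 0 < rho < 1 /\
  x 0%nat = x0 /\ alpha 0%nat = alpha0 /\
  (forall k, hinner H (g (x k)) (d k) < 0) /\
  (forall k j, 0 <= nu k j) /\
  (forall k,
     f (hadd H (x k) (hscal H (alpha k * beta ^ (l k)) (d k)))
       <= f (x k) + rho * alpha k * beta ^ (l k) * hinner H (g (x k)) (d k) + nu k (l k) /\
     (forall j, (j < l k)%nat ->
       ~ (f (hadd H (x k) (hscal H (alpha k * beta ^ j) (d k)))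
          <= f (x k) + rho * alpha k * beta ^ j * hinner H (g (x k)) (d k) + nu k j)) /\
     x (S k) = hadd H (x k) (hscal H (alpha k * beta ^ (l k)) (d k)) /\
     alpha (S k) = alpha k * powerRZ beta (Z.of_nat (l k) - 1)).

Definition kappa_c (alpha0 beta rho c1 c2 L : R) : R :=
  Rmin (rho * beta * alpha0 * c1) (2 * beta * rho * (1 - rho) * c1 ^ 2 / (L * c2 ^ 2)).

(* Main.v *)
Require Import Defs.
From Stdlib Require Import Reals Lra Lia Psatz Classical.
Open Scope R_scope.

Lemma hscal_0 {X} (H : hilbert X) x : hscal H 0 x = hzero H.
Proof.
  assert (E : hscal H 0 x = hadd H (hscal H 0 x) (hscal H 0 x)).
  { rewrite <- hscal_distr_s. f_equal. ring. }
  rewrite <- (hadd_opp _ H (hscal H 0 x)).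
  rewrite E at 2. rewrite <- hadd_assoc, hadd_opp, hadd_0. reflexivity.
Qed.

Lemma hinner_0l {X} (H : hilbert X) y : hinner H (hzero H) y = 0.
Proof. rewrite <- (hscal_0 H y), hinner_scal. ring. Qed.

Lemma hinner_opp_l {X} (H : hilbert X) a y : hinner H (hopp H a) y = - hinner H a y.
Proof.
  assert (E := hinner_add _ H a (hopp H a) y).
  rewrite hadd_opp, hinner_0l in E. lra.
Qed.

Lemma hinner_add_r {X} (H : hilbert X) x y z :
  hinner H x (hadd H y z) = hinner H x y + hinner H x z.
Proof. rewrite hinner_sym, hinner_add, (hinner_sym _ H y), (hinner_sym _ H z). auto. Qed.

Lemma hinner_scal_r {X} (H : hilbert X) a x y :
  hinner H x (hscal H a y) = a * hinner H x y.
Proof. rewrite hinner_sym, hinner_scal, hinner_sym. auto. Qed.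

Lemma hsub_inner {X} (H : hilbert X) a b v :
  hinner H (hsub H a b) v = hinner H a v - hinner H b v.
Proof. unfold hsub. rewrite hinner_add, hinner_opp_l. ring. Qed.

Lemma hnorm_pos {X} (H : hilbert X) v : 0 <= hnorm H v.
Proof. apply sqrt_pos. Qed.

Lemma hnorm_sq {X} (H : hilbert X) v : hnorm H v * hnorm H v = hinner H v v.
Proof. apply sqrt_sqrt, hinner_pos. Qed.

Lemma hnorm_scal {X} (H : hilbert X) s v : hnorm H (hscal H s v) = Rabs s * hnorm H v.
Proof.
  unfold hnorm. rewrite hinner_scal, hinner_scal_r, <- Rmult_assoc.
  rewrite sqrt_mult. 2: apply Rle_0_sqr. 2: apply hinner_pos.
  change (s * s) with (Rsqr s). rewrite sqrt_Rsqr_abs. auto.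
Qed.

Lemma hline {X} (H : hilbert X) x a b v :
  hadd H x (hscal H (a + b) v) = hadd H (hadd H x (hscal H a v)) (hscal H b v).
Proof. rewrite hscal_distr_s, hadd_assoc. auto. Qed.

Lemma hsub_add {X} (H : hilbert X) x w : hsub H (hadd H x w) x = w.
Proof.
  unfold hsub. rewrite (hadd_comm _ H x w), <- hadd_assoc, hadd_opp, hadd_0. auto.
Qed.

Lemma cauchy_schwarz {X} (H : hilbert X) a b :
  hinner H a b <= hnorm H a * hnorm H b.
Proof.
  set (A := hinner H a a). set (B := hinner H a b). set (C := hinner H b b).
  assert (Q : forall s, 0 <= s * s * A + 2 * s * B + C).
  { intro s. assert (P := hinner_pos _ H (hadd H (hscal H s a) b)).
    rewrite hinner_add, !hinner_add_r, !hinner_scal, !hinner_scal_r in P.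
    rewrite (hinner_sym _ H b a) in P. unfold A, B, C. lra. }
  assert (HA : 0 <= A) by apply hinner_pos.
  assert (HC : 0 <= C) by apply hinner_pos.
  assert (D : B * B <= A * C).
  { destruct (Rle_lt_or_eq_dec 0 A HA) as [Ap | A0].
    - specialize (Q (- B / A)).
      assert (E : - B / A * (- B / A) * A + 2 * (- B / A) * B + C = C - B * B / A) by (field; lra).
      rewrite E in Q.
      assert (0 <= (C - B * B / A) * A) by (apply Rmult_le_pos; lra).
      assert (E2 : (C - B * B / A) * A = A * C - B * B) by (field; lra). lra.
    - destruct (Req_dec B 0) as [B0 | B0].
      + rewrite B0, <- A0. lra.
      + specialize (Q (- (C + 1) / (2 * B))). rewrite <- A0 in Q.
        assert (E : - (C + 1) / (2 * B) * (- (C + 1) / (2 * B)) * 0 + 2 * (- (C + 1) / (2 * B)) * B + C = -1)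
          by (field; auto). lra. }
  unfold hnorm. fold A C. rewrite <- sqrt_mult by auto.
  apply Rle_trans with (Rabs B). apply Rle_abs.
  rewrite <- sqrt_Rsqr_abs. apply sqrt_le_1_alt. unfold Rsqr. lra.
Qed.

Lemma phi_deriv {X} (H : hilbert X) f g x v s0 :
  frechet_gradient H f g ->
  derivable_pt_lim (fun s => f (hadd H x (hscal H s v))) s0
    (hinner H (g (hadd H x (hscal H s0 v))) v).
Proof.
  intros Hf e He.
  set (y := hadd H x (hscal H s0 v)).
  set (nv := hnorm H v).
  assert (Hnv : 0 <= nv) by apply hnorm_pos.
  assert (He' : e / (nv + 1) > 0) by (apply Rdiv_lt_0_compat; lra).
  destruct (Hf y (e / (nv + 1)) He') as [delta [Hdel Hd]].
  assert (Hdp : 0 < delta / (nv + 1)) by (apply Rdiv_lt_0_compat; lra).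
  exists (mkposreal _ Hdp). simpl. intros h Hh0 Hh.
  rewrite hline. fold y.
  assert (Hn : hnorm H (hscal H h v) < delta).
  { rewrite hnorm_scal. fold nv.
    assert (Rabs h * (nv + 1) < delta).
    { apply Rmult_lt_reg_r with (/ (nv + 1)). apply Rinv_0_lt_compat; lra.
      rewrite Rmult_assoc, Rinv_r by lra. unfold Rdiv in Hh. lra. }
    assert (0 <= Rabs h) by apply Rabs_pos. nra. }
  specialize (Hd _ Hn). rewrite hnorm_scal, hinner_scal_r in Hd. fold nv in Hd.
  set (F := f (hadd H y (hscal H h v))) in *.
  set (D := hinner H (g y) v) in *.
  set (q := e / (nv + 1)) in *.
  assert (Eq : q * (nv + 1) = e) by (unfold q; field; lra).
  assert (E : (F - f y) / h - D = (F - f y - h * D) / h) by (field; auto).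
  rewrite E. unfold Rdiv. rewrite Rabs_mult, Rabs_inv.
  assert (Hha : 0 < Rabs h) by (apply Rabs_pos_lt; auto).
  apply Rle_lt_trans with (q * (Rabs h * nv) * / Rabs h).
  - apply Rmult_le_compat_r. left; apply Rinv_0_lt_compat; auto. auto.
  - replace (q * (Rabs h * nv) * / Rabs h) with (q * nv) by (field; lra). nra.
Qed.

Lemma poly_deriv a b s0 :
  derivable_pt_lim (fun s => s * a + s * s * b) s0 (a + 2 * s0 * b).
Proof.
  intros e He.
  assert (Hp : 0 < e / (Rabs b + 1)) by (apply Rdiv_lt_0_compat; [lra | assert (0 <= Rabs b) by apply Rabs_pos; lra]).
  exists (mkposreal _ Hp). simpl. intros h Hh0 Hh.
  replace (((s0 + h) * a + (s0 + h) * (s0 + h) * b - (s0 * a + s0 * s0 * b)) / h - (a + 2 * s0 * b))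
    with (h * b) by (field; auto).
  rewrite Rabs_mult.
  assert (0 <= Rabs b) by apply Rabs_pos.
  assert (Rabs h * (Rabs b + 1) < e).
  { apply Rmult_lt_reg_r with (/ (Rabs b + 1)). apply Rinv_0_lt_compat; lra.
    rewrite Rmult_assoc, Rinv_r by lra. unfold Rdiv in Hh. lra. }
  assert (0 <= Rabs h) by apply Rabs_pos. nra.
Qed.

Lemma descent {X} (H : hilbert X) f g L x v :
  frechet_gradient H f g ->
  (forall y z, hnorm H (hsub H (g y) (g z)) <= L * hnorm H (hsub H y z)) ->
  f (hadd H x v) <= f x + hinner H (g x) v + L / 2 * hinner H v v.
Proof.
  intros Hf HL.
  set (phi := fun s => f (hadd H x (hscal H s v))).
  set (a := hinner H (g x) v). set (b := L / 2 * hinner H v v).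
  set (P := fun s => s * a + s * s * b).
  destruct (MVT_cor2 (minus_fct phi P)
     (fun c => hinner H (g (hadd H x (hscal H c v))) v - (a + 2 * c * b)) 0 1 Rlt_0_1)
   as [c [Heq Hc]].
  { intros c _. apply derivable_pt_lim_minus. apply phi_deriv; auto. apply poly_deriv. }
  unfold minus_fct, phi, P in Heq.
  rewrite hscal_0, hadd_0, hscal_1 in Heq.
  assert (K : hinner H (g (hadd H x (hscal H c v))) v - a <= 2 * c * b).
  { unfold a. rewrite <- hsub_inner.
    eapply Rle_trans. apply cauchy_schwarz.
    eapply Rle_trans. apply Rmult_le_compat_r. apply hnorm_pos. apply HL.
    rewrite hsub_add, hnorm_scal, Rabs_pos_eq by lra.
    unfold b. rewrite <- hnorm_sq. lra. }
  lra.
Qed.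

Fixpoint psum (u : nat -> R) (n : nat) : R :=
  match n with O => 0 | S m => psum u m + u m end.

Lemma psum_sum u n : psum u (S n) = sum_f_R0 u n.
Proof. induction n. simpl. ring. rewrite tech5, <- IHn. simpl. ring. Qed.

Lemma psum_le u S0 n : (forall k, 0 <= u k) -> infinite_sum u S0 -> psum u n <= S0.
Proof.
  intros Hu Hs. assert (G : forall m, sum_f_R0 u m <= S0).
  { apply growing_ineq; auto. intro m. rewrite tech5. specialize (Hu (S m)). lra. }
  destruct n. simpl. specialize (G 0%nat). simpl in G. specialize (Hu 0%nat). lra.
  rewrite psum_sum. auto.
Qed.

Theorem corollary1 (X : Type) (H : hilbert X) (f : X -> R) (g : X -> X)
  (x0 : X) (alpha0 beta rho : R)
  (x : nat -> X) (alpha : nat -> R) (d : nat -> X)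
  (nu : nat -> nat -> R) (l : nat -> nat)
  (L flow c1 c2 Snu eps : R) (T : nat) :
  frechet_gradient H f g ->
  algorithm1 H f g x0 alpha0 beta rho x alpha d nu l ->
  (* A1 *)
  L > 0 -> (forall y z, hnorm H (hsub H (g y) (g z)) <= L * hnorm H (hsub H y z)) ->
  (* A2 *)
  (forall y, f y >= flow) ->
  (* A3 *)
  c1 > 0 -> c2 > 0 ->
  (forall k, hinner H (g (x k)) (d k) <= - c1 * (hnorm H (g (x k))) ^ 2) ->
  (forall k, hnorm H (d k) <= c2 * hnorm H (g (x k))) ->
  (* sum_k nu_k converges, with sum Snu *)
  infinite_sum (fun k => nu k (l k)) Snu ->
  0 < eps < 1 ->
  (1 <= T)%nat ->
  INR T >= 2 * Rmax Snu (f x0 - flow) / kappa_c alpha0 beta rho c1 c2 L / eps ^ 2 ->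
  exists k, (k < T)%nat /\ hnorm H (g (x k)) <= eps.
Proof.
  intros Hf Halg HL HLip Hlow Hc1 Hc2 HA3a HA3b Hsum Heps HT HTb.
  destruct Halg as (Ha0 & Hb & Hr & Hx0 & Hal0 & Hdesc & Hnu & Hstep).
  set (tau := 2 * (1 - rho) * c1 / (L * c2 ^ 2)).
  assert (Htau : 0 < tau).
  { unfold tau. apply Rdiv_lt_0_compat. apply Rmult_lt_0_compat; lra.
    apply Rmult_lt_0_compat; auto. apply pow_lt; auto. }
  assert (Suff : forall k t, 0 < t <= tau ->
     f (hadd H (x k) (hscal H t (d k))) <= f (x k) + rho * t * hinner H (g (x k)) (d k)).
  { intros k t Ht.
    assert (Dk := descent H f g L (x k) (hscal H t (d k)) Hf HLip).
    rewrite hinner_scal_r, hinner_scal, hinner_scal_r in Dk.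
    set (I := hinner H (g (x k)) (d k)) in *.
    set (G := hnorm H (g (x k))).
    assert (HI : I <= - c1 * G ^ 2) by apply HA3a.
    assert (HN : hinner H (d k) (d k) <= c2 ^ 2 * G ^ 2).
    { rewrite <- hnorm_sq. assert (Hd := HA3b k). fold G in Hd.
      assert (0 <= hnorm H (d k)) by apply hnorm_pos. nra. }
    set (N := hinner H (d k) (d k)) in *.
    assert (HLt : L * tau * c2 ^ 2 = 2 * (1 - rho) * c1).
    { unfold tau. field. repeat split; try lra; apply pow_nonzero; lra. }
    assert (HG2 : 0 <= G ^ 2) by (apply pow2_ge_0).
    assert (A1 : L * t * N <= L * t * (c2 ^ 2 * G ^ 2)).
    { apply Rmult_le_compat_l; auto. nra. }
    assert (A2 : L * t * (c2 ^ 2 * G ^ 2) <= L * tau * c2 ^ 2 * G ^ 2).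
    { assert (0 <= c2 ^ 2 * G ^ 2) by (apply Rmult_le_pos; apply pow2_ge_0).
      assert (0 <= L * (c2 ^ 2 * G ^ 2) * (tau - t)) by (apply Rmult_le_pos; [apply Rmult_le_pos|]; lra).
      nra. }
    assert (A3 : (1 - rho) * I + L / 2 * t * N <= 0).
    { rewrite HLt in A2.
      assert ((1 - rho) * I <= (1 - rho) * (- c1 * G ^ 2)) by (apply Rmult_le_compat_l; lra).
      lra. }
    assert (A4 : t * ((1 - rho) * I + L / 2 * t * N) <= 0).
    { assert (0 < t) by lra. nra. }
    nra. }
  assert (Hapos : forall k, 0 < alpha k).
  { induction k. lra. destruct (Hstep k) as (_ & _ & _ & E). rewrite E.
    apply Rmult_lt_0_compat; auto. apply powerRZ_lt; lra. }
  assert (Hbpos : forall j, 0 < beta ^ j) by (intro; apply pow_lt; lra).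
  assert (Fail : forall k j, (j < l k)%nat -> alpha k * beta ^ j > tau).
  { intros k j Hj. destruct (Rle_or_lt (alpha k * beta ^ j) tau) as [C|C]; [|lra].
    exfalso. destruct (Hstep k) as (_ & F & _). apply (F j Hj).
    assert (0 < alpha k * beta ^ j) by (apply Rmult_lt_0_compat; auto).
    specialize (Suff k _ (conj H0 C)). specialize (Hnu k j). lra. }
  set (m := Rmin alpha0 tau).
  assert (Hm : 0 < m) by (unfold m; apply Rmin_pos; lra).
  assert (Ham : forall k, m <= alpha k).
  { induction k. rewrite Hal0. apply Rmin_l.
    destruct (Hstep k) as (_ & _ & _ & E). rewrite E.
    destruct (l k) as [|n] eqn:El.
    - simpl. rewrite Rmult_1_r.
      assert (alpha k <= alpha k * / beta).
      { assert (1 <= / beta).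
        { rewrite <- Rinv_1. apply Rinv_le_contravar; lra. }
        specialize (Hapos k). nra. }
      lra.
    - replace (Z.of_nat (S n) - 1)%Z with (Z.of_nat n) by lia.
      rewrite <- pow_powerRZ. assert (Hf1 := Fail k n). rewrite El in Hf1.
      specialize (Hf1 (Nat.lt_succ_diag_r n)). assert (m <= tau) by apply Rmin_r. lra. }
  assert (Hstepb : forall k, beta * m <= alpha k * beta ^ l k).
  { intro k. destruct (l k) as [|n] eqn:El.
    - simpl. rewrite Rmult_1_r. specialize (Ham k). specialize (Hapos k). nra.
    - assert (Hf1 := Fail k n). rewrite El in Hf1.
      specialize (Hf1 (Nat.lt_succ_diag_r n)). assert (m <= tau) by apply Rmin_r.
      simpl. nra. }
  set (kap := kappa_c alpha0 beta rho c1 c2 L).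
  assert (Hkap : kap <= rho * c1 * (beta * m)).
  { unfold kap, kappa_c, m.
    assert (E : 2 * beta * rho * (1 - rho) * c1 ^ 2 / (L * c2 ^ 2) = rho * c1 * (beta * tau)).
    { unfold tau. field. repeat split; try lra; apply pow_nonzero; lra. }
    rewrite E. unfold Rmin. destruct (Rle_dec alpha0 tau); destruct (Rle_dec _ _); nra. }
  assert (Hkpos : 0 < kap).
  { unfold kap, kappa_c. apply Rmin_pos.
    repeat apply Rmult_lt_0_compat; lra.
    assert (0 < 1 - rho) by lra.
    assert (0 < c1 ^ 2) by (apply pow_lt; lra).
    assert (0 < c2 ^ 2) by (apply pow_lt; lra).
    apply Rdiv_lt_0_compat; repeat apply Rmult_lt_0_compat; lra. }
  set (G2 := fun k => hnorm H (g (x k)) ^ 2).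
  assert (Dec : forall k, f (x (S k)) <= f (x k) - kap * G2 k + nu k (l k)).
  { intro k. destruct (Hstep k) as (A & _ & Ex & _). rewrite Ex.
    assert (HI := HA3a k). unfold G2.
    set (t := alpha k * beta ^ l k) in *.
    set (I := hinner H (g (x k)) (d k)) in *.
    set (Q := hnorm H (g (x k)) ^ 2) in *.
    assert (HQ : 0 <= Q) by apply pow2_ge_0.
    assert (Ht := Hstepb k). fold t in Ht.
    assert (rho * t * I <= rho * t * (- c1 * Q)).
    { assert (0 <= t) by (assert (0 < beta * m) by (apply Rmult_lt_0_compat; lra); lra).
      apply Rmult_le_compat_l; auto. apply Rmult_le_pos; lra. }
    assert (kap * Q <= rho * c1 * t * Q).
    { apply Rmult_le_compat_r; auto.
      assert (0 <= rho * c1 * (t - beta * m)) by (apply Rmult_le_pos; [apply Rmult_le_pos|]; lra).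
      nra. }
    assert (E : rho * alpha k * beta ^ l k * I = rho * t * I) by (unfold t; ring).
    rewrite E in A. nra. }
  set (nuk := fun k => nu k (l k)).
  assert (Tel : forall n, f (x n) + kap * psum G2 n <= f x0 + psum nuk n).
  { induction n. simpl. rewrite Hx0. lra.
    simpl. specialize (Dec n). unfold nuk in *. lra. }
  assert (Hnus : psum nuk T <= Snu) by (apply psum_le; auto; intro; apply Hnu).
  destruct (classic (exists k, (k < T)%nat /\ hnorm H (g (x k)) <= eps)) as [Y|N]; auto.
  exfalso.
  assert (Big : forall n, (1 <= n)%nat -> (n <= T)%nat -> INR n * eps ^ 2 < psum G2 n).
  { intros n H1 H2. induction n. lia.
    assert (Hg : eps ^ 2 < G2 n).
    { unfold G2. destruct (Rle_or_lt (hnorm H (g (x n))) eps) as [C|C].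
      exfalso; apply N; exists n; split; [lia|auto].
      simpl. nra. }
    destruct n. simpl. lra.
    rewrite S_INR. change (psum G2 (S (S n))) with (psum G2 (S n) + G2 (S n)). assert (IH := IHn ltac:(lia) ltac:(lia)). lra. }
  specialize (Big T HT (le_n T)).
  specialize (Tel T). specialize (Hlow (x T)).
  assert (HM1 : Snu <= Rmax Snu (f x0 - flow)) by apply Rmax_l.
  assert (HM2 : f x0 - flow <= Rmax Snu (f x0 - flow)) by apply Rmax_r.
  set (M := Rmax Snu (f x0 - flow)) in *.
  assert (Hkb : kap * (INR T * eps ^ 2) < 2 * M).
  { assert (kap * (INR T * eps ^ 2) < kap * psum G2 T) by (apply Rmult_lt_compat_l; auto). lra. }
  assert (He2 : 0 < eps ^ 2) by (apply pow_lt; lra).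
  assert (INR T * (kap * eps ^ 2) >= 2 * M).
  { apply Rle_ge. apply Rge_le in HTb.
    replace (2 * M) with (2 * M / kap / eps ^ 2 * (kap * eps ^ 2)) by (field; lra).
    apply Rmult_le_compat_r. apply Rmult_le_pos; lra. fold kap in HTb. auto. }
  nra.
Qed.
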